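(* Let $\sigma : X^+ \to S$ be a choice of generators for a semigroup $S$. Let $S^0$ be $S$ with a new zero $0$ adjoined, let $Y = X \cup \{z\}$ for a new letter $z$, and let $\tau : Y^+ \to S^0$ be the unique extension of $\sigma$ to a choice of generators for $S^0$ (so $z\tau = 0$). Then $L_\sigma(S) = L_\tau(S^0) \cap \hat{X}^*$.
   Context: For a semigroup $S$, $S^1$ denotes the monoid obtained by adjoining a new identity $1$ (even if $S$ already has one). A choice of generators for $S$ is a surjective morphism $\sigma : X^+ \to S$ from a free semigroup; it extends uniquely to $\sigma^1 : X^* \to S^1$. Let $\overline{X} = \{\overline{x} : x \in X\}$ be a set of formal inverses, $\hat{X} = X \cup \overline{X}$. The loop automaton of $S$ with respect to $\sigma$ is the directed labelled graph with vertex set $S^1$, having for each $a \in S^1$ and $x \in X$ an edge from $a$ to $a(x\sigma)$ labelled $x$ and an edge from $a(x\sigma)$ to $a$ labelled $\overline{x}$. The loop problem $L_\sigma(S) \subseteq \hat{X}^*$ is the set of words labelling paths from $1$ to $1$ in this graph (including the empty word). *)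

(* Defs.v *)
From mathcomp Require Import all_boot.
Set Implicit Arguments. Unset Strict Implicit. Unset Printing Implicit Defensive.

(* A morphism X^+ -> T from the free semigroup is determined by the images
   of the letters, gen : X -> T; its value on the nonempty word x w is
   [word_eval mul gen x w]. *)
Definition word_eval (T X : Type) (mul : T -> T -> T) (gen : X -> T)
  (x : X) (w : seq X) : T :=
  foldl (fun acc y => mul acc (gen y)) (gen x) w.

Definition is_choice_of_generators (T X : Type) (mul : T -> T -> T)
  (gen : X -> T) : Prop :=
  forall s : T, exists (x : X) (w : seq X), word_eval mul gen x w = s.

(* T^1 : T with a NEW identity adjoined, represented as option T, None = 1. *)
Definition adj1_mul (T : Type) (mul : T -> T -> T) (a b : option T) : option T :=
  match a, b with
  | None, _ => b
  | _, None => a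
  | Some x, Some y => Some (mul x y)
  end.

(* T^0 : T with a NEW zero adjoined, represented as option T, None = 0. *)
Definition adj0_mul (T : Type) (mul : T -> T -> T) (a b : option T) : option T :=
  match a, b with
  | Some x, Some y => Some (mul x y)
  | _, _ => None
  end.

(* Letters of \hat X: (x, false) is x, (x, true) is the formal inverse \bar x. *)
(* lpath mul gen a w c : w labels a path from a to c in the loop automaton
   of T w.r.t. gen (vertex set T^1 = option T). Edges: a --x--> a(x gen),
   and a(x gen) --\bar x--> a. *)
Inductive lpath (T X : Type) (mul : T -> T -> T) (gen : X -> T) :
  option T -> seq (X * bool) -> option T -> Prop :=
| lp_nil a : lpath mul gen a [::] a
| lp_fwd a x w c :
    lpath mul gen (adj1_mul mul a (Some (gen x))) w c ->
    lpath mul gen a ((x, false) :: w) c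
| lp_bwd a x w c :
    lpath mul gen a w c ->
    lpath mul gen (adj1_mul mul a (Some (gen x))) ((x, true) :: w) c.

Definition loop_problem (T X : Type) (mul : T -> T -> T) (gen : X -> T)
  (w : seq (X * bool)) : Prop :=
  lpath mul gen None w None.

(* Y = X \cup {z} represented as option X, with z = None.
   tau : Y -> S^0 extends sigma and sends z to 0. *)
Definition tau_gen (S X : Type) (gen : X -> S) (y : option X) : option S :=
  match y with
  | Some x => Some (gen x)
  | None => None
  end.

Definition embed_hat (X : Type) (w : seq (X * bool)) : seq (option X * bool) :=
  map (fun p => (Some p.1, p.2)) w.

Definition in_hatX_star (X : Type) (v : seq (option X * bool)) : bool :=
  all (fun p : option X * bool => if p.1 is Some _ then true else false) v.

(* Main.v *)
Require Import Defs.
From mathcomp Require Import all_boot.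
Set Implicit Arguments.
Unset Strict Implicit.

Definition liftv (S : Type) (a : option S) : option (option S) :=
  match a with None => None | Some s => Some (Some s) end.

Lemma liftv_inj (S : Type) (a b : option S) : liftv a = liftv b -> a = b.
Proof. by case: a; case: b => //= ? ? [->]. Qed.

Lemma fwd_path (S X : Type) (mul : S -> S -> S) (sigma : X -> S) a w c :
  lpath mul sigma a w c ->
  lpath (adj0_mul mul) (tau_gen sigma) (liftv a) (embed_hat w) (liftv c).
Proof.
elim => {a w c} [a|a x w c _ IH|a x w c _ IH] /=.
- by constructor.
- apply: lp_fwd; by case: a IH.
- have := lp_bwd (Some x) IH; by case: a IH.
Qed.

Lemma bwd_path (S X : Type) (mul : S -> S -> S) (sigma : X -> S) A v C :
  lpath (adj0_mul mul) (tau_gen sigma) A v C ->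
  forall a w c, A = liftv a -> v = embed_hat w -> C = liftv c ->
  lpath mul sigma a w c.
Proof.
elim => {A v C} [A|A y v C _ IH|A y v C _ IH] a w c.
- move=> EA E EC; subst A; move/liftv_inj: EC => ->. case: w E => // _. constructor.
- move=> EA E EC; subst A; case: w E => //= [[x b]] w [Ey Eb Ev]; subst.
  apply: lp_fwd; apply: IH => //; by case: a.
- move=> EA E EC; case: w E => //= [[x b]] w [Ey Eb Ev]; subst.
  have [a' [Ea' Ea]] : exists a', A = liftv a' /\ a = adj1_mul mul a' (Some (sigma x)).
    case: A EA IH => [[s|]|] /=; case: a => //=.
    + move=> t [<-] _; by exists (Some s).
    + move=> t [<-] _; by exists None.
  subst a; apply: lp_bwd; exact: IH.
Qed.

Theorem corollary3p3 (S X : Type) (mul : S -> S -> S)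
  (mulA : forall a b c : S, mul a (mul b c) = mul (mul a b) c)
  (sigma : X -> S) (hsigma : is_choice_of_generators mul sigma) :
  forall v : seq (option X * bool),
    (exists w : seq (X * bool), v = embed_hat w /\ loop_problem mul sigma w)
    <->
    (loop_problem (adj0_mul mul) (tau_gen sigma) v /\
     in_hatX_star v).
Proof.
move=> v; split.
- move=> [w [-> Hw]]; split.
  + exact: (fwd_path Hw).
  + by elim: w {Hw}.
- move=> [Hl Hin].
  have [w Ew] : exists w, v = embed_hat w.
    elim: v Hin {Hl} => [|[[x|] b] v IH] //=; first by exists [::].
    move=> /IH [w ->]; by exists ((x, b) :: w).
  exists w; split => //.
  exact: (bwd_path Hl (a:=None) (c:=None)).
Qed.
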